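(* Let $1\le p\le2$, $A\in\mathbb{R}^{m\times n}$, let $\bar{x}\in\mathbb{R}^n$ have exactly $S\ge1$ nonzero groups, $b:=A\bar{x}$, and suppose the $(p,1)$-GREC$(S,S)$ holds. Let $\lambda>0$ and let $x^*$ be a global minimizer of $\|Ax-b\|_2^2+\lambda\|x\|_{p,1}$. Then $\|x^*-\bar{x}\|_2^2\le 2\lambda^2S/\phi_{p,1}^4(S,S)$; in particular $\|x^*-\bar{x}\|_2^2=O(\lambda^2S)$.
   Context: Group structure: $\{1,\dots,n\}$ is partitioned into disjoint nonempty index sets $\mathcal{G}_1,\dots,\mathcal{G}_r$; $x_{\mathcal{G}_i}$ is the subvector indexed by $\mathcal{G}_i$. For $\mathcal{J}\subseteq\{1,\dots,r\}$, $\|x_{\mathcal{G}_{\mathcal{J}}}\|_{p,q}:=(\sum_{i\in\mathcal{J}}\|x_{\mathcal{G}_i}\|_p^q)^{1/q}$ and $\|x\|_{p,q}:=\|x_{\mathcal{G}_{\{1,\dots,r\}}}\|_{p,q}$. For $\mathcal{J}\subseteq\{1,\dots,r\}$ and integer $N$, $\mathcal{J}(x;N)$ is the set of the $N$ indices $i\in\mathcal{J}^c$ with the largest $\|x_{\mathcal{G}_i}\|_p$ (ties broken arbitrarily). $\phi_{p,q}(S,N):=\inf\{\|Ax\|_2/\|x_{\mathcal{G}_{\mathcal{N}}}\|_{p,2}: x\ne0,\ |\mathcal{J}|\le S,\ \|x_{\mathcal{G}_{\mathcal{J}^c}}\|_{p,q}\le\|x_{\mathcal{G}_{\mathcal{J}}}\|_{p,q},\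 \mathcal{N}=\mathcal{J}(x;N)\cup\mathcal{J}\}$; the $(p,q)$-GREC$(S,N)$ holds if $\phi_{p,q}(S,N)>0$. *)

(* Defs.v *)
From Stdlib Require Import Reals Lra Lia List.
Open Scope R_scope.

Fixpoint sumR (k : nat) (f : nat -> R) : R :=
  match k with
  | O => 0
  | S k' => sumR k' f + f k'
  end.

(* a^y for a >= 0 (with 0^y = 0, used only with y > 0) *)
Definition rpow (a y : R) : R := if Rlt_dec 0 a then Rpower a y else 0.

Definition cardP (r : nat) (J : nat -> bool) : nat := length (filter J (seq 0 r)).

(* Group structure on {0..n-1}: index i belongs to group G_(g i), groups 0..r-1,
   all nonempty. *)
Definition is_group_partition (n r : nat) (g : nat -> nat) : Prop :=
  (forall i, (i < n)%nat -> (g i < r)%nat) /\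
  (forall j, (j < r)%nat -> exists i, (i < n)%nat /\ g i = j).

Definition gnorm (p : R) (n : nat) (g : nat -> nat) (x : nat -> R) (j : nat) : R :=
  rpow (sumR n (fun i => if Nat.eqb (g i) j then rpow (Rabs (x i)) p else 0)) (1 / p).

Definition mnorm (p q : R) (n r : nat) (g : nat -> nat) (x : nat -> R) (J : nat -> bool) : R :=
  rpow (sumR r (fun j => if J j then rpow (gnorm p n g x j) q else 0)) (1 / q).

Definition fnorm (p q : R) (n r : nat) (g : nat -> nat) (x : nat -> R) : R :=
  mnorm p q n r g x (fun _ => true).

Definition matvec (n : nat) (A : nat -> nat -> R) (x : nat -> R) (k : nat) : R :=
  sumR n (fun i => A k i * x i).

Definition sqnorm2 (m : nat) (v : nat -> R) : R := sumR m (fun k => v k ^ 2).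

Definition nonzero_vec (n : nat) (x : nat -> R) : Prop := exists i, (i < n)%nat /\ x i <> 0.

Definition group_nonzero (n : nat) (g : nat -> nat) (x : nat -> R) (j : nat) : Prop :=
  exists i, (i < n)%nat /\ g i = j /\ x i <> 0.

(* T is a valid choice of J(x;N): N indices (or all of them, if fewer than N
   remain) of J^c having the largest || x_{G_i} ||_p, ties broken arbitrarily. *)
Definition top_groups (p : R) (n r : nat) (g : nat -> nat) (x : nat -> R)
  (J : nat -> bool) (N : nat) (T : nat -> bool) : Prop :=
  (forall j, (j < r)%nat -> T j = true -> J j = false) /\
  cardP r T = Nat.min N (cardP r (fun j => negb (J j))) /\
  (forall j k, (j < r)%nat -> (k < r)%nat -> T j = true -> J k = false -> T k = false ->
     gnorm p n g x k <= gnorm p n g x j).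

Definition grec_ratios (p q : R) (m n r : nat) (g : nat -> nat) (A : nat -> nat -> R)
  (S N : nat) (t : R) : Prop :=
  exists (x : nat -> R) (J T : nat -> bool),
    nonzero_vec n x /\
    (cardP r J <= S)%nat /\
    mnorm p q n r g x (fun j => negb (J j)) <= mnorm p q n r g x J /\
    top_groups p n r g x J N T /\
    t = sqrt (sqnorm2 m (matvec n A x)) / mnorm p 2 n r g x (fun j => orb (T j) (J j)).

Definition is_inf (E : R -> Prop) (l : R) : Prop :=
  (forall y, E y -> l <= y) /\ (forall l', (forall y, E y -> l' <= y) -> l' <= l).

Definition is_phi (p q : R) (m n r : nat) (g : nat -> nat) (A : nat -> nat -> R)
  (S N : nat) (phi : R) : Prop :=
  is_inf (grec_ratios p q m n r g A S N) phi.

(* Main.v *)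
Require Import Defs.
From Stdlib Require Import Reals Lra Lia List Classical Bool.
Open Scope R_scope.
Open Scope bool_scope.

Lemma sumR_ext n f h : (forall i, (i < n)%nat -> f i = h i) -> sumR n f = sumR n h.
Proof. induction n; simpl; intros H; auto. rewrite IHn by (intros; apply H; lia). rewrite H by lia; auto. Qed.

Lemma sumR_le n f h : (forall i, (i < n)%nat -> f i <= h i) -> sumR n f <= sumR n h.
Proof. induction n; simpl; intros H; [lra|]. assert (f n <= h n) by (apply H; lia).
 assert (sumR n f <= sumR n h) by (apply IHn; intros; apply H; lia). lra. Qed.

Lemma sumR_plus n f h : sumR n (fun i => f i + h i) = sumR n f + sumR n h.
Proof. induction n; simpl; [lra|]. rewrite IHn; lra. Qed.

Lemma sumR_scal n c f : sumR n (fun i => c * f i) = c * sumR n f.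
Proof. induction n; simpl; [lra|]. rewrite IHn; lra. Qed.

Lemma sumR_zero n : sumR n (fun _ => 0) = 0.
Proof. induction n; simpl; [lra|]. rewrite IHn; lra. Qed.

Lemma sumR_nonneg n f : (forall i, (i < n)%nat -> 0 <= f i) -> 0 <= sumR n f.
Proof. intros H. rewrite <- (sumR_zero n). apply sumR_le; auto. Qed.

Lemma sumR_term_le n f k : (forall i, (i < n)%nat -> 0 <= f i) -> (k < n)%nat -> f k <= sumR n f.
Proof. induction n; simpl; intros H Hk; [lia|].
 assert (0 <= sumR n f) by (apply sumR_nonneg; intros; apply H; lia).
 destruct (Nat.eq_dec k n). subst; lra.
 assert (f k <= sumR n f) by (apply IHn; [intros; apply H; lia| lia]).
 assert (0 <= f n) by (apply H; lia). lra. Qed.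

Lemma sumR_split n (J : nat -> bool) f :
  sumR n (fun i => if J i then f i else 0) + sumR n (fun i => if negb (J i) then f i else 0) = sumR n f.
Proof. rewrite <- sumR_plus. apply sumR_ext. intros i _. destruct (J i); simpl; lra. Qed.

Lemma sumR_swap r n F : sumR r (fun j => sumR n (F j)) = sumR n (fun i => sumR r (fun j => F j i)).
Proof. induction r; simpl. symmetry; apply sumR_zero. rewrite IHr, <- sumR_plus; auto. Qed.

Lemma sumR_indicator r (k : nat) c : (k < r)%nat -> sumR r (fun j => if Nat.eqb k j then c else 0) = c.
Proof. induction r; simpl; intros H; [lia|]. destruct (Nat.eq_dec k r).
 - subst. rewrite Nat.eqb_refl. rewrite (sumR_ext _ _ (fun _ => 0)). rewrite sumR_zero; lra.
   intros i Hi. destruct (Nat.eqb_spec r i); [lia|auto].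
 - rewrite IHr by lia. destruct (Nat.eqb_spec k r); [lia|lra]. Qed.

Lemma cardP_S r J : cardP (S r) J = (cardP r J + if J r then 1 else 0)%nat.
Proof. unfold cardP. rewrite seq_S, filter_app, length_app. simpl. destruct (J r); simpl; lia. Qed.

Lemma cardP_ext r J K : (forall j, (j < r)%nat -> J j = K j) -> cardP r J = cardP r K.
Proof. induction r; intros H; [reflexivity|]. rewrite !cardP_S, IHr by (intros; apply H; lia).
 rewrite H by lia; auto. Qed.

Lemma cardP_split r J K : cardP r J = (cardP r (fun j => J j && K j) + cardP r (fun j => J j && negb (K j)))%nat.
Proof. induction r; [reflexivity|]. rewrite !cardP_S, IHr. destruct (J r), (K r); simpl; lia. Qed.

Lemma cardP_pos r J : (0 < cardP r J)%nat -> exists j, (j < r)%nat /\ J j = true.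
Proof. induction r; intros H; [cbv in H; lia|]. rewrite cardP_S in H.
 destruct (J r) eqn:E. exists r; split; auto.
 destruct IHr as [j [? ?]]; [lia|]. exists j; split; auto. Qed.

Lemma cardP_ge1 r J k : (k < r)%nat -> J k = true -> (1 <= cardP r J)%nat.
Proof. induction r; intros Hk HJ; [lia|]. rewrite cardP_S. destruct (Nat.eq_dec k r).
 subst; rewrite HJ; lia. specialize (IHr ltac:(lia) HJ); lia. Qed.

Lemma cardP_add r T k : (k < r)%nat -> T k = false ->
  cardP r (fun j => T j || Nat.eqb j k) = S (cardP r T).
Proof. induction r; intros Hk HT; [lia|]. rewrite !cardP_S. destruct (Nat.eq_dec k r).
 - subst. rewrite Nat.eqb_refl, HT. simpl. rewrite (cardP_ext _ _ T); [lia|].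
   intros j Hj. destruct (Nat.eqb_spec j r); [lia|]. now rewrite orb_false_r.
 - rewrite IHr; auto; try lia. destruct (Nat.eqb_spec r k); [lia|]. rewrite orb_false_r. lia. Qed.

Lemma argmax r (P : nat -> bool) (f : nat -> R) : (exists k, (k < r)%nat /\ P k = true) ->
  exists k, (k < r)%nat /\ P k = true /\ forall k', (k' < r)%nat -> P k' = true -> f k' <= f k.
Proof. induction r; intros [k [Hk HP]]; [lia|].
 destruct (classic (exists k, (k < r)%nat /\ P k = true)) as [Hex|Hn].
 - destruct (IHr Hex) as [m [Hm [HPm Hmax]]].
   destruct (P r) eqn:Er.
   + destruct (Rle_dec (f r) (f m)).
     * exists m; repeat split; auto. intros k' Hk' HP'. destruct (Nat.eq_dec k' r); [subst; auto|]. apply Hmax; auto; lia.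
     * exists r; repeat split; auto. intros k' Hk' HP'. destruct (Nat.eq_dec k' r); [subst; lra|].
       assert (f k' <= f m) by (apply Hmax; auto; lia). lra.
   + exists m; repeat split; auto. intros k' Hk' HP'. destruct (Nat.eq_dec k' r); [subst; congruence|]. apply Hmax; auto; lia.
 - assert (k = r). { destruct (Nat.eq_dec k r); auto. exfalso; apply Hn; exists k; split; auto; lia. }
   subst. exists r; repeat split; auto. intros k' Hk' HP'. destruct (Nat.eq_dec k' r); [subst; lra|].
   exfalso; apply Hn; exists k'; split; auto; lia. Qed.

Lemma Rpower_pos a y : 0 < Rpower a y.
Proof. unfold Rpower; apply exp_pos. Qed.

Lemma rpow_nonneg a y : 0 <= rpow a y.
Proof. unfold rpow; destruct (Rlt_dec 0 a); [left; apply Rpower_pos|lra]. Qed.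

Lemma rpow_0 y : rpow 0 y = 0.
Proof. unfold rpow; destruct (Rlt_dec 0 0); [lra|auto]. Qed.

Lemma rpow_pos a y : 0 < a -> rpow a y = Rpower a y.
Proof. unfold rpow; destruct (Rlt_dec 0 a); [auto|lra]. Qed.

Lemma rpow_gt0 a y : 0 < a -> 0 < rpow a y.
Proof. intros; rewrite rpow_pos; auto; apply Rpower_pos. Qed.

Lemma rpow_eq0 a y : 0 <= a -> rpow a y = 0 -> a = 0.
Proof. intros H H0. destruct H; auto. pose proof (rpow_gt0 a y H). lra. Qed.

Lemma rpow_inv p a : 0 < p -> 0 <= a -> rpow (rpow a p) (1/p) = a.
Proof. intros Hp [Ha|Ha].
 - rewrite (rpow_pos a) by auto. rewrite rpow_pos by apply Rpower_pos. rewrite Rpower_mult.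
   replace (p * (1/p)) with 1 by (field; lra). apply Rpower_1; auto.
 - subst; rewrite !rpow_0; auto. Qed.

Lemma rpow_inv' p a : 0 < p -> 0 <= a -> rpow (rpow a (1/p)) p = a.
Proof. intros Hp [Ha|Ha].
 - rewrite (rpow_pos a) by auto. rewrite rpow_pos by apply Rpower_pos. rewrite Rpower_mult.
   replace (1/p * p) with 1 by (field; lra). apply Rpower_1; auto.
 - subst; rewrite !rpow_0; auto. Qed.

Lemma rpow_mult a b y : 0 <= a -> 0 <= b -> rpow (a * b) y = rpow a y * rpow b y.
Proof. intros [Ha|Ha] [Hb|Hb].
 - rewrite !rpow_pos; auto. symmetry; apply Rpower_mult_distr; auto. nra.
 - subst. rewrite Rmult_0_r, rpow_0; lra.
 - subst. rewrite Rmult_0_l, rpow_0; lra.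
 - subst. rewrite Rmult_0_l, rpow_0; lra. Qed.

Lemma rpow_le_mono a b y : 0 < y -> 0 <= a <= b -> rpow a y <= rpow b y.
Proof. intros Hy [[Ha|Ha] Hab].
 - rewrite !rpow_pos by lra. apply Rle_Rpower_l; lra.
 - subst; rewrite rpow_0; apply rpow_nonneg. Qed.

Lemma rpow_lt_mono a b y : 0 < y -> 0 <= a < b -> rpow a y < rpow b y.
Proof. intros Hy [[Ha|Ha] Hab].
 - rewrite !rpow_pos by lra. apply Rlt_Rpower_l; lra.
 - subst; rewrite rpow_0; apply rpow_gt0; lra. Qed.

Lemma rpow_le_inv a b y : 0 < y -> 0 <= a -> 0 <= b -> rpow a y <= rpow b y -> a <= b.
Proof. intros Hy Ha Hb H. destruct (Rle_dec a b); auto.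
 pose proof (rpow_lt_mono b a y Hy ltac:(lra)). lra. Qed.

Lemma rpow_1 a : 0 <= a -> rpow a 1 = a.
Proof. intros [Ha|Ha]. rewrite rpow_pos by auto; apply Rpower_1; auto. subst; apply rpow_0. Qed.

Lemma rpow_2 a : 0 <= a -> rpow a 2 = a ^ 2.
Proof. intros [Ha|Ha]. rewrite rpow_pos by auto. replace 2 with (INR 2) by (simpl; lra).
 apply Rpower_pow; auto. subst; rewrite rpow_0; simpl; lra. Qed.

Lemma rpow_half a : 0 <= a -> rpow a (1/2) = sqrt a.
Proof. intros [Ha|Ha]. rewrite rpow_pos by auto. replace (1/2) with (/2) by field.
 apply Rpower_sqrt; auto. subst; rewrite rpow_0, sqrt_0; auto. Qed.

Lemma ln_le a : 0 < a -> ln a <= a - 1.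
Proof. intros H. pose proof (exp_ineq1_le (ln a)). rewrite exp_ln in H0; lra. Qed.

Lemma ln_div' a b : 0 < a -> 0 < b -> ln (a / b) = ln a - ln b.
Proof. intros. unfold Rdiv. rewrite ln_mult, ln_Rinv; try lra. apply Rinv_0_lt_compat; auto. Qed.

Lemma bernoulli t p : 0 < t -> 1 <= p -> 1 + p * (t - 1) <= Rpower t p.
Proof. intros Ht Hp. set (s := Rpower t p). assert (Hs : 0 < s) by apply Rpower_pos.
 set (m := s / p + 1 - 1 / p).
 assert (Hm : 0 < m). { unfold m. assert (0 < s/p) by (apply Rdiv_lt_0_compat; lra).
   assert (1/p <= 1). { apply Rmult_le_reg_r with p; [lra|]. unfold Rdiv. rewrite Rmult_assoc, Rinv_l by lra. lra. } lra. }
 assert (HA := ln_le (s / m) ltac:(apply Rdiv_lt_0_compat; lra)).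
 assert (HB := ln_le (1 / m) ltac:(apply Rdiv_lt_0_compat; lra)).
 rewrite ln_div' in HA by lra. rewrite ln_div' in HB by lra. rewrite ln_1 in HB.
 assert (Hls : ln s = p * ln t) by (unfold s; rewrite ln_Rpower; auto).
 assert (E : (1/p) * (s/m - 1) + (1 - 1/p) * (1/m - 1) = 0) by (unfold m; field; split; lra).
 assert (Hip : 0 < 1/p) by (apply Rdiv_lt_0_compat; lra).
 assert (Hip1 : 0 <= 1 - 1/p). { assert (1/p <= 1). { apply Rmult_le_reg_r with p; [lra|]. unfold Rdiv. rewrite Rmult_assoc, Rinv_l by lra. lra. } lra. }
 assert (H1 : (1/p) * (ln s - ln m) + (1 - 1/p) * (0 - ln m) <= 0).
 { rewrite <- E. apply Rplus_le_compat; apply Rmult_le_compat_l; lra. }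
 assert (H2 : ln t <= ln m). { rewrite Hls in H1. replace (1/p * (p * ln t - ln m) + (1 - 1/p) * (0 - ln m)) with (ln t - ln m) in H1 by (field; lra). lra. }
 assert (H3 : t <= m). { rewrite <- (exp_ln t), <- (exp_ln m) by auto. destruct H2 as [H2|H2]. left; apply exp_increasing; auto. rewrite H2; lra. }
 unfold m in H3. assert (p * t <= p * (s/p + 1 - 1/p)) by (apply Rmult_le_compat_l; lra).
 replace (p * (s/p + 1 - 1/p)) with (s + p - 1) in H by (field; lra). lra. Qed.

Lemma tangent w z p : 0 <= w -> 0 < z -> 1 <= p -> rpow z p * (1 + p * (w / z - 1)) <= rpow w p.
Proof. intros [Hw|Hw] Hz Hp.
 - assert (Hb := bernoulli (w / z) p ltac:(apply Rdiv_lt_0_compat; lra) Hp).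
   replace w with (z * (w / z)) at 2 by (field; lra).
   rewrite rpow_mult by (try lra; left; apply Rdiv_lt_0_compat; lra).
   rewrite (rpow_pos (w/z)) by (apply Rdiv_lt_0_compat; lra).
   apply Rmult_le_compat_l; [apply rpow_nonneg|auto].
 - subst. rewrite rpow_0. replace (0 / z) with 0 by (field; lra). pose proof (rpow_nonneg z p). nra. Qed.

Lemma convex_rpow x y l p : 0 <= x -> 0 <= y -> 0 <= l <= 1 -> 1 <= p ->
  rpow (l * x + (1 - l) * y) p <= l * rpow x p + (1 - l) * rpow y p.
Proof. intros Hx Hy Hl Hp. set (z := l * x + (1 - l) * y).
 assert (Hz : 0 <= z) by (unfold z; nra). destruct Hz as [Hz|Hz].
 - pose proof (tangent x z p Hx Hz Hp). pose proof (tangent y z p Hy Hz Hp).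
   assert (E : l * (1 + p * (x / z - 1)) + (1 - l) * (1 + p * (y / z - 1)) = 1) by (unfold z in *; field; lra).
   assert (l * (rpow z p * (1 + p * (x / z - 1))) + (1 - l) * (rpow z p * (1 + p * (y / z - 1))) <= l * rpow x p + (1 - l) * rpow y p).
   { apply Rplus_le_compat; apply Rmult_le_compat_l; lra. }
   replace (l * (rpow z p * (1 + p * (x / z - 1))) + (1 - l) * (rpow z p * (1 + p * (y / z - 1)))) with (rpow z p * (l * (1 + p * (x / z - 1)) + (1 - l) * (1 + p * (y / z - 1)))) in H1 by ring.
   rewrite E in H1; lra.
 - rewrite <- Hz, rpow_0. pose proof (rpow_nonneg x p). pose proof (rpow_nonneg y p). nra. Qed.

Lemma sq_le_rpow a p : 0 <= a <= 1 -> 1 <= p <= 2 -> a ^ 2 <= rpow a p.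
Proof. intros [[Ha|Ha] Ha1] Hp.
 - rewrite rpow_pos by auto. rewrite <- (Rpower_pow 2 a Ha). unfold Rpower.
   assert (ln a <= 0). { destruct Ha1. left; rewrite <- ln_1; apply ln_increasing; auto. subst; rewrite ln_1; lra. }
   simpl INR. assert ((1+1) * ln a <= p * ln a) by nra.
   destruct H0. left; apply exp_increasing; auto. rewrite H0; lra.
 - subst. rewrite rpow_0. simpl; lra. Qed.

Definition pnorm (p : R) (n : nat) (v : nat -> R) : R :=
  rpow (sumR n (fun i => rpow (Rabs (v i)) p)) (1 / p).

Lemma pnorm_nonneg p n v : 0 <= pnorm p n v.
Proof. apply rpow_nonneg. Qed.

Lemma sum_nonneg_rpow p n v : 0 <= sumR n (fun i => rpow (Rabs (v i)) p).
Proof. apply sumR_nonneg; intros; apply rpow_nonneg. Qed.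

Lemma pnorm_pow p n v : 0 < p -> rpow (pnorm p n v) p = sumR n (fun i => rpow (Rabs (v i)) p).
Proof. intros; unfold pnorm; apply rpow_inv'; auto; apply sum_nonneg_rpow. Qed.

Lemma pnorm_zero p n v : 0 < p -> pnorm p n v = 0 -> forall i, (i < n)%nat -> v i = 0.
Proof. intros Hp H i Hi. apply rpow_eq0 in H; [|apply sum_nonneg_rpow].
 assert (Ht := sumR_term_le n (fun i => rpow (Rabs (v i)) p) i ltac:(intros; apply rpow_nonneg) Hi).
 simpl in Ht. pose proof (rpow_nonneg (Rabs (v i)) p).
 assert (rpow (Rabs (v i)) p = 0) by lra. apply rpow_eq0 in H1; [|apply Rabs_pos].
 destruct (Req_dec (v i) 0); auto. apply Rabs_no_R0 in H2; lra. Qed.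

Lemma pnorm_ext p n v w : (forall i, (i < n)%nat -> Rabs (v i) = Rabs (w i)) -> pnorm p n v = pnorm p n w.
Proof. intros H; unfold pnorm; f_equal; apply sumR_ext; intros; rewrite H; auto. Qed.

Lemma minkowski p n u v : 1 <= p ->
  pnorm p n (fun i => u i + v i) <= pnorm p n u + pnorm p n v.
Proof. intros Hp. set (A := pnorm p n u). set (B := pnorm p n v).
 assert (HA : 0 <= A) by apply pnorm_nonneg. assert (HB : 0 <= B) by apply pnorm_nonneg.
 destruct HA as [HA|HA].
 2:{ rewrite <- HA. assert (Hz := pnorm_zero p n u ltac:(lra) (eq_sym HA)).
     rewrite (pnorm_ext p n _ v). unfold B; lra. intros i Hi; rewrite Hz; auto; f_equal; ring. }
 destruct HB as [HB|HB].
 2:{ rewrite <- HB. assert (Hz := pnorm_zero p n v ltac:(lra) (eq_sym HB)).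
     rewrite (pnorm_ext p n _ u). unfold A; lra. intros i Hi; rewrite Hz; auto; f_equal; ring. }
 set (C := A + B). set (l := A / C).
 assert (HC : 0 < C) by (unfold C; lra).
 assert (Hl : 0 <= l <= 1). { unfold l; split. left; apply Rdiv_lt_0_compat; lra.
   apply Rmult_le_reg_r with C; auto. unfold Rdiv; rewrite Rmult_assoc, Rinv_l by lra. unfold C; lra. }
 assert (H1l : 1 - l = B / C) by (unfold l, C; field; lra).
 assert (Hsum : sumR n (fun i => rpow (Rabs (u i + v i)) p) <= rpow C p).
 { apply Rle_trans with (sumR n (fun i => l * (rpow (C / A) p * rpow (Rabs (u i)) p) + (1 - l) * (rpow (C / B) p * rpow (Rabs (v i)) p))).
   - apply sumR_le. intros i Hi.
     apply Rle_trans with (rpow (Rabs (u i) + Rabs (v i)) p).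
     + apply rpow_le_mono; [lra|]. split; [apply Rabs_pos|apply Rabs_triang].
     + rewrite <- !rpow_mult; try (apply Rabs_pos); try (left; apply Rdiv_lt_0_compat; lra).
       replace (Rabs (u i) + Rabs (v i)) with (l * (C / A * Rabs (u i)) + (1 - l) * (C / B * Rabs (v i))).
       2:{ rewrite H1l; unfold l; field; lra. }
       apply convex_rpow; auto; apply Rmult_le_pos; try apply Rabs_pos; left; apply Rdiv_lt_0_compat; lra.
   - rewrite sumR_plus, !sumR_scal.
     rewrite <- (pnorm_pow p n u), <- (pnorm_pow p n v) by lra. fold A B.
     rewrite <- !rpow_mult; try lra; try (left; apply Rdiv_lt_0_compat; lra).
     replace (C / A * A) with C by (field; lra). replace (C / B * B) with C by (field; lra). nra. }
 unfold pnorm at 1. rewrite <- (rpow_inv p C) by lra. apply rpow_le_mono.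
 apply Rdiv_lt_0_compat; lra. split; auto. apply sum_nonneg_rpow. Qed.

Lemma l2_le_lp p n v : 1 <= p <= 2 -> sumR n (fun i => v i ^ 2) <= pnorm p n v ^ 2.
Proof. intros Hp. set (N := pnorm p n v). assert (HN : 0 <= N) by apply pnorm_nonneg.
 destruct HN as [HN|HN].
 2:{ rewrite <- HN. rewrite (sumR_ext _ _ (fun _ => 0)). rewrite sumR_zero; simpl; lra.
     intros i Hi. rewrite (pnorm_zero p n v) by (auto; lra). simpl; ring. }
 set (K := rpow N p). assert (HK : 0 < K) by (apply rpow_gt0; auto).
 assert (HKs : K = sumR n (fun i => rpow (Rabs (v i)) p)) by (apply pnorm_pow; lra).
 apply Rle_trans with (sumR n (fun i => N ^ 2 * (rpow (Rabs (v i)) p * / K))).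
 - apply sumR_le; intros i Hi.
   assert (Hvi : Rabs (v i) <= N).
   { apply rpow_le_inv with p; try lra; try apply Rabs_pos. fold K. rewrite HKs.
     apply (sumR_term_le n (fun i => rpow (Rabs (v i)) p)); auto. intros; apply rpow_nonneg. }
   set (a := Rabs (v i) / N).
   assert (Ha : 0 <= a <= 1). { unfold a; split. apply Rmult_le_pos; [apply Rabs_pos|left; apply Rinv_0_lt_compat; auto].
     apply Rmult_le_reg_r with N; auto. unfold Rdiv; rewrite Rmult_assoc, Rinv_l by lra. lra. }
   assert (Hr : rpow (Rabs (v i)) p * / K = rpow a p).
   { replace (Rabs (v i)) with (N * a) by (unfold a; field; lra). rewrite rpow_mult by lra. fold K. field; lra. }
   rewrite Hr. assert (Hsq := sq_le_rpow a p Ha Hp).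
   replace (v i ^ 2) with (N ^ 2 * a ^ 2).
   2:{ unfold a. rewrite <- (pow2_abs (v i)). field; lra. }
   apply Rmult_le_compat_l; [nra|auto].
 - rewrite sumR_scal. rewrite (sumR_ext _ _ (fun i => / K * rpow (Rabs (v i)) p)) by (intros; ring).
   rewrite sumR_scal, <- HKs. replace (/ K * K) with 1 by (field; lra). lra. Qed.

Definition mask (g : nat -> nat) (j : nat) (x : nat -> R) (i : nat) : R :=
  if Nat.eqb (g i) j then x i else 0.

Lemma gnorm_pnorm p n g x j : gnorm p n g x j = pnorm p n (mask g j x).
Proof. unfold gnorm, pnorm, mask. f_equal. apply sumR_ext; intros i _.
 destruct (Nat.eqb (g i) j); auto. rewrite Rabs_R0, rpow_0; auto. Qed.

Lemma gnorm_nonneg p n g x j : 0 <= gnorm p n g x j.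
Proof. apply rpow_nonneg. Qed.

Lemma mnorm1 p n r g x J : mnorm p 1 n r g x J = sumR r (fun j => if J j then gnorm p n g x j else 0).
Proof. unfold mnorm. replace (1/1) with 1 by field.
 rewrite rpow_1. apply sumR_ext; intros; destruct (J i); auto; apply rpow_1, gnorm_nonneg.
 apply sumR_nonneg; intros; destruct (J i); [apply rpow_nonneg|lra]. Qed.

Lemma mnorm2 p n r g x J : mnorm p 2 n r g x J = sqrt (sumR r (fun j => if J j then gnorm p n g x j ^ 2 else 0)).
Proof. unfold mnorm. rewrite rpow_half.
 f_equal; apply sumR_ext; intros; destruct (J i); auto; apply rpow_2, gnorm_nonneg.
 apply sumR_nonneg; intros; destruct (J i); [apply rpow_nonneg|lra]. Qed.

Lemma sumR_const_mask r (T : nat -> bool) (c : R) : sumR r (fun j => if T j then c else 0) = INR (cardP r T) * c.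
Proof. induction r; simpl. unfold cardP; simpl; lra. rewrite IHr, cardP_S, plus_INR.
 destruct (T r); simpl; lra. Qed.

Lemma cauchy_schwarz r (J : nat -> bool) (u : nat -> R) :
  (sumR r (fun j => if J j then u j else 0)) ^ 2 <= INR (cardP r J) * sumR r (fun j => if J j then u j ^ 2 else 0).
Proof. induction r. { unfold cardP; simpl; lra. } cbn [sumR].
 rewrite cardP_S, plus_INR. set (s := sumR r (fun j => if J j then u j else 0)) in *.
 set (Q := sumR r (fun j => if J j then u j ^ 2 else 0)) in *. set (k := INR (cardP r J)) in *.
 assert (Hk : 0 <= k) by apply pos_INR.
 assert (HQ : 0 <= Q) by (apply sumR_nonneg; intros; destruct (J i); [nra|lra]).
 destruct (J r); cbv beta iota; simpl INR.
 - set (w := u r). destruct Hk as [Hk|Hk].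
   + assert (k * (Q + k * w ^ 2 - 2 * s * w) >= 0) by (pose proof (pow2_ge_0 (s - k * w)); nra).
     assert (Q + k * w ^ 2 - 2 * s * w >= 0). { destruct (Rle_dec 0 (Q + k * w ^ 2 - 2 * s * w)); [lra|nra]. }
     nra.
   + rewrite <- Hk in *. assert (s = 0) by nra. subst. rewrite H. nra.
 - nra. Qed.

Lemma cardP_false r : cardP r (fun _ => false) = 0%nat.
Proof. induction r; auto. rewrite cardP_S, IHr; auto. Qed.

Lemma top_exists p n r g x J N : exists T, top_groups p n r g x J N T.
Proof. induction N.
 - exists (fun _ => false). unfold top_groups. repeat split; try (intros; discriminate).
   rewrite cardP_false; lia.
 - destruct IHN as [T [H1 [H2 H3]]]. set (c := cardP r (fun j => negb (J j))) in *.
   destruct (Nat.le_gt_cases c N).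
   + exists T. repeat split; auto. lia.
   + assert (HT : cardP r T = N) by lia.
     assert (Hs := cardP_split r (fun j => negb (J j)) T).
     assert (cardP r (fun j => negb (J j) && T j) = cardP r T).
     { apply cardP_ext. intros j Hj. destruct (T j) eqn:E; [rewrite (H1 j Hj E)|]; simpl; auto using andb_false_r. }
     fold c in Hs. destruct (cardP_pos r (fun j => negb (J j) && negb (T j))) as [k0 [Hk0 Pk0]]; [lia|].
     destruct (argmax r (fun j => negb (J j) && negb (T j)) (gnorm p n g x)) as [k [Hk [Pk Hmax]]]; [eauto|].
     apply andb_prop in Pk; destruct Pk as [PJ PT]. apply negb_true_iff in PJ, PT.
     exists (fun j => T j || Nat.eqb j k). repeat split.
     * intros j Hj Ht. apply orb_prop in Ht. destruct Ht as [Ht|Ht]; auto. apply Nat.eqb_eq in Ht; subst; auto.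
     * rewrite cardP_add by auto. lia.
     * intros j k' Hj Hk' Ht HJk HTk. apply orb_false_elim in HTk. destruct HTk as [HTk Hne].
       apply orb_prop in Ht. destruct Ht as [Ht|Ht]; auto.
       apply Nat.eqb_eq in Ht; subst. apply Hmax; auto. rewrite HJk, HTk; auto. Qed.

Lemma partition_bound p n r g h : is_group_partition n r g -> 1 <= p <= 2 ->
  sumR n (fun i => h i ^ 2) <= sumR r (fun j => gnorm p n g h j ^ 2).
Proof. intros [Hg _] Hp.
 rewrite (sumR_ext n _ (fun i => sumR r (fun j => mask g j h i ^ 2))).
 - rewrite <- sumR_swap. apply sumR_le; intros j Hj. rewrite gnorm_pnorm. apply l2_le_lp; auto.
 - intros i Hi. rewrite <- (sumR_indicator r (g i) (h i ^ 2)) by auto.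
   apply sumR_ext; intros j _. unfold mask. destruct (Nat.eqb (g i) j); simpl; ring. Qed.

Lemma div_le_goal X c d : 0 < d -> X * d <= c -> X <= c / d.
Proof. intros Hd H. apply Rmult_le_reg_r with d; auto. unfold Rdiv; rewrite Rmult_assoc, Rinv_l by lra; lra. Qed.

Theorem corollary2p1
  (m n r : nat) (g : nat -> nat) (p : R) (A : nat -> nat -> R)
  (xbar : nat -> R) (S : nat) (lambda : R) (xstar : nat -> R) (phi : R) :
  is_group_partition n r g ->
  1 <= p <= 2 ->
  (1 <= S)%nat ->
  (exists Jbar : nat -> bool,
     (forall j, (j < r)%nat -> (Jbar j = true <-> group_nonzero n g xbar j)) /\
     cardP r Jbar = S) ->
  is_phi p 1 m n r g A S S phi ->
  0 < phi ->
  0 < lambda ->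
  (forall x : nat -> R,
     sqnorm2 m (fun k => matvec n A xstar k - matvec n A xbar k)
       + lambda * fnorm p 1 n r g xstar
     <= sqnorm2 m (fun k => matvec n A x k - matvec n A xbar k)
       + lambda * fnorm p 1 n r g x) ->
  sumR n (fun i => (xstar i - xbar i) ^ 2) <= 2 * lambda ^ 2 * INR S / phi ^ 4.
Proof.
 intros Hpart Hp HS [Jb [HJb HcJ]] [Hinf _] Hphi Hl Hopt.
 set (h := fun i => xstar i - xbar i).
 set (a := sumR r (fun j => if Jb j then gnorm p n g h j else 0)).
 set (b := sumR r (fun j => if negb (Jb j) then gnorm p n g h j else 0)).
 set (Q := sqnorm2 m (matvec n A h)).
 assert (HSpos : 0 < INR S) by (apply lt_0_INR; lia).
 assert (Ha0 : 0 <= a) by (apply sumR_nonneg; intros; destruct (Jb i); [apply gnorm_nonneg|lra]).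
 assert (Hb0 : 0 <= b) by (apply sumR_nonneg; intros; destruct (Jb i); simpl; [lra|apply gnorm_nonneg]).
 assert (HQ0 : 0 <= Q) by (unfold Q, sqnorm2; apply sumR_nonneg; intros; apply pow2_ge_0).
 assert (HQab : Q <= lambda * (a - b)).
 { specialize (Hopt xbar).
   assert (E1 : sqnorm2 m (fun k => matvec n A xstar k - matvec n A xbar k) = Q).
   { unfold Q, sqnorm2. apply sumR_ext; intros k _. f_equal. unfold matvec, h.
     rewrite (sumR_ext n (fun i => A k i * (xstar i - xbar i)) (fun i => A k i * xstar i + -1 * (A k i * xbar i))) by (intros; ring).
     rewrite sumR_plus, sumR_scal. ring. }
   assert (E2 : sqnorm2 m (fun k => matvec n A xbar k - matvec n A xbar k) = 0).
   { unfold sqnorm2. rewrite <- (sumR_zero m). apply sumR_ext; intros; simpl; ring. }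
   rewrite E1, E2 in Hopt. unfold fnorm in Hopt. rewrite !mnorm1 in Hopt.
   assert (Hd : sumR r (fun j => if true then gnorm p n g xbar j else 0) - sumR r (fun j => if true then gnorm p n g xstar j else 0) <= a - b).
   { replace (a - b) with (sumR r (fun j => (if Jb j then gnorm p n g h j else 0) + -1 * (if negb (Jb j) then gnorm p n g h j else 0))).
     2:{ rewrite sumR_plus, sumR_scal. unfold a, b. ring. }
     replace (sumR r (fun j => if true then gnorm p n g xbar j else 0) - sumR r (fun j => if true then gnorm p n g xstar j else 0))
       with (sumR r (fun j => gnorm p n g xbar j + -1 * gnorm p n g xstar j)).
     2:{ rewrite sumR_plus, sumR_scal. simpl. change (fun j => gnorm p n g xbar j) with (gnorm p n g xbar). change (fun j => gnorm p n g xstar j) with (gnorm p n g xstar). ring. }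
     apply sumR_le; intros j Hj. destruct (Jb j) eqn:EJ; simpl.
     - rewrite !gnorm_pnorm.
       rewrite (pnorm_ext p n (mask g j xbar) (fun i => mask g j xstar i + mask g j (fun i => xbar i - xstar i) i)).
       2:{ intros i _. unfold mask. destruct (Nat.eqb (g i) j); f_equal; ring. }
       rewrite (pnorm_ext p n (mask g j h) (mask g j (fun i => xbar i - xstar i))).
       2:{ intros i _. unfold mask, h. destruct (Nat.eqb (g i) j). apply Rabs_minus_sym. auto. }
       pose proof (minkowski p n (mask g j xstar) (mask g j (fun i => xbar i - xstar i)) ltac:(lra)). lra.
     - assert (Hz : forall i, (i < n)%nat -> g i = j -> xbar i = 0).
       { intros i Hi Hgi. destruct (Req_dec (xbar i) 0); auto. exfalso.
         assert (Jb j = true) by (apply HJb; auto; exists i; auto). congruence. }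
       rewrite !gnorm_pnorm.
       rewrite (pnorm_ext p n (mask g j xbar) (fun _ => 0)).
       2:{ intros i Hi. unfold mask. destruct (Nat.eqb_spec (g i) j); auto. rewrite Hz; auto. }
       rewrite (pnorm_ext p n (mask g j xstar) (mask g j h)).
       2:{ intros i Hi. unfold mask, h. destruct (Nat.eqb_spec (g i) j); auto. rewrite (Hz i); auto. f_equal; ring. }
       assert (pnorm p n (fun _ => 0) = 0).
       { unfold pnorm. rewrite (sumR_ext _ _ (fun _ => 0)). rewrite sumR_zero, rpow_0; auto.
         intros; rewrite Rabs_R0, rpow_0; auto. }
       lra. }
   nra. }
 assert (Hba : b <= a) by nra.
 destruct (classic (forall i, (i < n)%nat -> h i = 0)) as [Hz|Hnz].
 { rewrite (sumR_ext _ _ (fun _ => 0)). rewrite sumR_zero.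
   apply div_le_goal. apply pow_lt; auto. rewrite Rmult_0_l. nra.
   intros i Hi. pose proof (Hz i Hi). unfold h in H. simpl. nra. }
 assert (Hnv : nonzero_vec n h).
 { apply not_all_ex_not in Hnz. destruct Hnz as [i Hi]. exists i. apply imply_to_and in Hi. auto. }
 destruct (top_exists p n r g h Jb S) as [T HT]. pose proof HT as [HT1 [HT2 HT3]].
 set (s2N := sumR r (fun j => if T j || Jb j then gnorm p n g h j ^ 2 else 0)).
 set (s2J := sumR r (fun j => if Jb j then gnorm p n g h j ^ 2 else 0)).
 set (s2c := sumR r (fun j => if negb (T j || Jb j) then gnorm p n g h j ^ 2 else 0)).
 assert (Hratio : phi <= sqrt Q / sqrt s2N).
 { apply Hinf. exists h, Jb, T. repeat split; auto. lia. rewrite !mnorm1. fold a b. lra.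
   rewrite mnorm2. auto. }
 assert (HJN : s2J <= s2N).
 { apply sumR_le; intros j _. destruct (T j), (Jb j); simpl; try lra; apply pow2_ge_0. }
 assert (HCS : a ^ 2 <= INR S * s2J).
 { unfold a, s2J. rewrite <- HcJ. apply cauchy_schwarz. }
 assert (Hs2N0 : 0 <= s2N) by (apply sumR_nonneg; intros; destruct (T i || Jb i); [apply pow2_ge_0|lra]).
 set (M := sqrt s2N).
 assert (HM : 0 < M).
 { destruct (sqrt_pos s2N) as [H|H]; auto. unfold M in H. assert (Hr : phi <= sqrt Q / sqrt s2N) by exact Hratio. rewrite <- H in Hr.
   unfold Rdiv in Hr. rewrite Rinv_0, Rmult_0_r in Hr. lra. }
 assert (HMsq : M ^ 2 = s2N) by (unfold M; apply pow2_sqrt; auto).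
 set (q := sqrt Q). assert (Hq2 : q ^ 2 = Q) by (unfold q; apply pow2_sqrt; auto).
 assert (Hq0 : 0 <= q) by apply sqrt_pos.
 assert (HphiM : phi * M <= q).
 { fold q M in Hratio. apply Rmult_le_reg_r with (/ M). apply Rinv_0_lt_compat; auto.
   rewrite Rmult_assoc, Rinv_r by lra. lra. }
 set (sg := sqrt (INR S)). assert (Hsg2 : sg ^ 2 = INR S) by (unfold sg; apply pow2_sqrt; lra).
 assert (Hsg0 : 0 <= sg) by apply sqrt_pos.
 assert (HaM : a <= sg * M).
 { assert (a ^ 2 <= (sg * M) ^ 2). { rewrite Rpow_mult_distr, Hsg2, HMsq. nra. }
   destruct (Rle_dec a (sg * M)); auto. assert (0 <= sg * M) by (apply Rmult_le_pos; lra). exfalso. assert (Hn : sg * M < a) by lra. assert ((sg*M)^2 < a^2) by (assert (0 < (a - sg*M) * (a + sg*M)) by (apply Rmult_lt_0_compat; lra); nra). lra. }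
 assert (Hkey : phi ^ 2 * M <= lambda * sg).
 { assert (H1 : (phi * M) ^ 2 <= q ^ 2) by (apply pow_incr; split; [apply Rmult_le_pos; lra|auto]).
   assert (H2 : lambda * a <= lambda * (sg * M)) by (apply Rmult_le_compat_l; lra).
   assert (H3 : lambda * b >= 0) by nra.
   assert (phi ^ 2 * M ^ 2 <= lambda * sg * M).
   { replace (phi ^ 2 * M ^ 2) with ((phi * M) ^ 2) by ring. rewrite Hq2 in H1. nra. }
   apply Rmult_le_reg_r with M; auto. nra. }
 assert (Hmain : s2N * phi ^ 4 <= lambda ^ 2 * INR S).
 { rewrite <- HMsq, <- Hsg2. assert (0 <= phi ^ 2 * M) by (apply Rmult_le_pos; [apply pow2_ge_0|lra]).
   assert ((phi ^ 2 * M) ^ 2 <= (lambda * sg) ^ 2) by (apply pow_incr; auto).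
   replace (M ^ 2 * phi ^ 4) with ((phi ^ 2 * M) ^ 2) by ring. replace (lambda ^ 2 * sg ^ 2) with ((lambda * sg) ^ 2) by ring. auto. }
 assert (Hpt : forall k, (k < r)%nat -> negb (T k || Jb k) = true -> gnorm p n g h k <= b / INR S).
 { intros k Hk Hn. apply negb_true_iff, orb_false_elim in Hn. destruct Hn as [HTk HJk].
   assert (Hge := cardP_ge1 r (fun j => negb (Jb j) && negb (T j)) k Hk ltac:(cbv beta; rewrite HJk, HTk; auto)).
   assert (Hsp := cardP_split r (fun j => negb (Jb j)) T).
   assert (cardP r (fun j => negb (Jb j) && T j) = cardP r T).
   { apply cardP_ext. intros j Hj. destruct (T j) eqn:E; [rewrite (HT1 j Hj E)|]; simpl; auto using andb_false_r. }
   assert (HcT : cardP r T = S) by lia.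
   assert (INR S * gnorm p n g h k <= b).
   { rewrite <- HcT, <- sumR_const_mask. apply Rle_trans with (sumR r (fun j => if T j then gnorm p n g h j else 0)).
     - apply sumR_le; intros j Hj. destruct (T j) eqn:E; [|lra]. apply HT3; auto.
     - apply sumR_le; intros j Hj. destruct (T j) eqn:E; [rewrite (HT1 j Hj E); simpl; lra|].
       destruct (Jb j); simpl; [lra|apply gnorm_nonneg]. }
   apply div_le_goal; auto. lra. }
 assert (Hc : s2c <= b / INR S * b).
 { apply Rle_trans with (sumR r (fun j => b / INR S * (if negb (T j || Jb j) then gnorm p n g h j else 0))).
   - apply sumR_le; intros j Hj. destruct (negb (T j || Jb j)) eqn:E.
     + pose proof (Hpt j Hj E). pose proof (gnorm_nonneg p n g h j). simpl. nra.
     + lra.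
   - rewrite sumR_scal. apply Rmult_le_compat_l. apply Rmult_le_pos; [lra|left; apply Rinv_0_lt_compat; lra].
     apply sumR_le; intros j _. destruct (T j), (Jb j); simpl; try lra; apply gnorm_nonneg. }
 assert (Hc2 : s2c <= s2N).
 { apply Rle_trans with (b / INR S * b); auto. apply Rle_trans with s2J; auto.
   apply Rmult_le_reg_l with (INR S); auto. replace (INR S * (b / INR S * b)) with (b ^ 2) by (field; lra). nra. }
 assert (Hsplit := sumR_split r (fun j => T j || Jb j) (fun j => gnorm p n g h j ^ 2)).
 cbv beta in Hsplit. fold s2N s2c in Hsplit.
 assert (Hpb : sumR n (fun i => (xstar i - xbar i) ^ 2) <= sumR r (fun j => gnorm p n g h j ^ 2)) by exact (partition_bound p n r g h Hpart Hp).
 apply div_le_goal. apply pow_lt; auto.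
 apply Rle_trans with (2 * s2N * phi ^ 4); [|nra].
 apply Rmult_le_compat_r. apply pow_le; lra.
 lra.
Qed.
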